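(* Define $\mu:[0,\infty)\to\mathbb R$ by $\mu(0)=0$ and, for $s>0$, $\mu(s)=\dfrac{\cosh s-\cos s-\sin s\,\sinh s}{\sin^2\frac{s}{2}\,(\sinh s-s)-\sinh^2\frac{s}{2}\,(\sin s-s)}$. Then $\mu$ is nonnegative, has countably many points $0=s_0<s_1<s_2<\dots$ where it vanishes, and on each interval $(s_k,s_{k+1})$, $k=0,1,2,\dots$, $\mu$ has a unique critical point $m_k$; on each such interval $\mu$ strictly increases from $0$ to $\mu(m_k)$ and then strictly decreases from $\mu(m_k)$ to $0$. *)

(* Defs.v *)
From Stdlib Require Import Reals.
Open Scope R_scope.

Definition mu_num (s : R) : R := cosh s - cos s - sin s * sinh s.
Definition mu_den (s : R) : R :=
  (sin (s / 2)) ^ 2 * (sinh s - s) - (sinh (s / 2)) ^ 2 * (sin s - s).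

(* mu(0) = 0, mu(s) = num/den for s > 0; the values for s < 0 are
   irrelevant (mu is only considered on [0, oo)) and set to 0. *)
Definition mu (s : R) : R :=
  if Rle_dec s 0 then 0 else mu_num s / mu_den s.

(* Main.v *)
Require Import Defs.
From Stdlib Require Import Reals.
From Stdlib Require Import Lra Lia Psatz.
From Coquelicot Require Import Coquelicot.
Open Scope R_scope.

Lemma exp_mul_neg x : exp x * exp (- x) = 1.
Proof. rewrite <- exp_plus. replace (x + - x) with 0 by ring. apply exp_0. Qed.

Lemma ch2 x : cosh x ^ 2 = 1 + sinh x ^ 2.
Proof. unfold cosh, sinh. pose proof (exp_mul_neg x). nra. Qed.

Lemma sc2 x : cos x ^ 2 = 1 - sin x ^ 2.
Proof. pose proof (sin2_cos2 x). unfold Rsqr in H. nra. Qed.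

Lemma sinh_2 x : sinh (2 * x) = 2 * sinh x * cosh x.
Proof. unfold sinh, cosh. replace (2 * x) with (x + x) by ring.
  replace (- (x + x)) with (- x + - x) by ring. rewrite !exp_plus. field. Qed.

Lemma cosh_2 x : cosh (2 * x) = cosh x ^ 2 + sinh x ^ 2.
Proof. unfold sinh, cosh. replace (2 * x) with (x + x) by ring.
  replace (- (x + x)) with (- x + - x) by ring. rewrite !exp_plus.
  pose proof (exp_mul_neg x). nra. Qed.

Lemma sinh_pos x : 0 < x -> 0 < sinh x.
Proof. intros H. rewrite <- sinh_0. apply sinh_lt; auto. Qed.

Lemma sinh_nonneg x : 0 <= x -> 0 <= sinh x.
Proof. intros [H|H]. left; apply sinh_pos; auto. subst; rewrite sinh_0; lra. Qed.

Lemma cosh_ge1 x : 1 <= cosh x.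
Proof. unfold cosh. pose proof (exp_mul_neg x). pose proof (exp_pos x).
  pose proof (exp_pos (-x)). assert (exp x * (exp x + exp (-x) - 2) >= 0).
  { replace (exp x * (exp x + exp (-x) - 2)) with ((exp x - 1)^2 + (exp x * exp (-x) - 1)) by ring.
    rewrite H. pose proof (pow2_ge_0 (exp x - 1)). lra. }
  assert (exp x + exp (-x) - 2 >= 0). { destruct (Rle_dec 0 (exp x + exp (-x) - 2)); nra. }
  lra. Qed.

Lemma incr_le (f f' : R -> R) a b : a <= b ->
  (forall x, a <= x <= b -> is_derive f x (f' x)) ->
  (forall x, a <= x <= b -> 0 <= f' x) -> f a <= f b.
Proof.
  intros Hab Hd Hp. destruct Hab as [Hab|Hab]; [|rewrite Hab; apply Rle_refl].
  destruct (MVT_cor2 f f' a b Hab) as [c [Hc1 Hc2]].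
  - intros c Hc. apply is_derive_Reals. apply Hd; auto.
  - assert (0 <= f' c) by (apply Hp; lra). nra.
Qed.

Lemma incr_lt (f f' : R -> R) a b : a < b ->
  (forall x, a <= x <= b -> is_derive f x (f' x)) ->
  (forall x, a < x < b -> 0 < f' x) -> f a < f b.
Proof.
  intros Hab Hd Hp.
  destruct (MVT_cor2 f f' a b Hab) as [c [Hc1 Hc2]].
  - intros c Hc. apply is_derive_Reals. apply Hd; auto.
  - assert (0 < f' c) by (apply Hp; lra). nra.
Qed.

Ltac fin := first [ring | field | lra].

Lemma sinh_ge x : 0 <= x -> x <= sinh x.
Proof. intros H.
  pose proof (incr_le (fun t => sinh t - t) (fun t => cosh t - 1) 0 x H) as K.
  simpl in K. rewrite sinh_0 in K. enough (0 - 0 <= sinh x - x) by lra. apply K.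
  - intros y _. unfold sinh, cosh. auto_derive; auto. fin.
  - intros y _. pose proof (cosh_ge1 y); lra.
Qed.

Lemma cosh_ge2 x : 0 <= x -> 1 + x^2/2 <= cosh x.
Proof. intros H.
  pose proof (incr_le (fun t => cosh t - 1 - t^2/2) (fun t => sinh t - t) 0 x H) as K.
  simpl in K. rewrite cosh_0 in K. enough (1 - 1 - 0^2/2 <= cosh x - 1 - x^2/2) by lra. apply K.
  - intros y _. unfold sinh, cosh. auto_derive; auto. fin.
  - intros y Hy. pose proof (sinh_ge y); lra.
Qed.

Lemma sinh_ge3 x : 0 <= x -> x + x^3/6 <= sinh x.
Proof. intros H.
  pose proof (incr_le (fun t => sinh t - t - t^3/6) (fun t => cosh t - 1 - t^2/2) 0 x H) as K.
  simpl in K. rewrite sinh_0 in K. enough (0 - 0 - 0^3/6 <= sinh x - x - x^3/6) by lra. apply K.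
  - intros y _. unfold sinh, cosh. auto_derive; auto. fin.
  - intros y Hy. pose proof (cosh_ge2 y); lra.
Qed.

Lemma cosh_ge4 x : 0 <= x -> 1 + x^2/2 + x^4/24 <= cosh x.
Proof. intros H.
  pose proof (incr_le (fun t => cosh t - 1 - t^2/2 - t^4/24) (fun t => sinh t - t - t^3/6) 0 x H) as K.
  simpl in K. rewrite cosh_0 in K. enough (1 - 1 - 0^2/2 - 0^4/24 <= cosh x - 1 - x^2/2 - x^4/24) by lra. apply K.
  - intros y _. unfold sinh, cosh. auto_derive; auto. fin.
  - intros y Hy. pose proof (sinh_ge3 y); lra.
Qed.

Lemma sinh_ge5 x : 0 <= x -> x + x^3/6 + x^5/120 <= sinh x.
Proof. intros H.
  pose proof (incr_le (fun t => sinh t - t - t^3/6 - t^5/120) (fun t => cosh t - 1 - t^2/2 - t^4/24) 0 x H) as K.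
  simpl in K. rewrite sinh_0 in K. enough (0 - 0 - 0^3/6 - 0^5/120 <= sinh x - x - x^3/6 - x^5/120) by lra. apply K.
  - intros y _. unfold sinh, cosh. auto_derive; auto. fin.
  - intros y Hy. pose proof (cosh_ge4 y); lra.
Qed.

Lemma cosh_ge6 x : 0 <= x -> 1 + x^2/2 + x^4/24 + x^6/720 <= cosh x.
Proof. intros H.
  pose proof (incr_le (fun t => cosh t - 1 - t^2/2 - t^4/24 - t^6/720) (fun t => sinh t - t - t^3/6 - t^5/120) 0 x H) as K.
  simpl in K. rewrite cosh_0 in K. enough (1 - 1 - 0^2/2 - 0^4/24 - 0^6/720 <= cosh x - 1 - x^2/2 - x^4/24 - x^6/720) by lra. apply K.
  - intros y _. unfold sinh, cosh. auto_derive; auto. fin.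
  - intros y Hy. pose proof (sinh_ge5 y); lra.
Qed.

Lemma sinh_ge7 x : 0 <= x -> x + x^3/6 + x^5/120 + x^7/5040 <= sinh x.
Proof. intros H.
  pose proof (incr_le (fun t => sinh t - t - t^3/6 - t^5/120 - t^7/5040) (fun t => cosh t - 1 - t^2/2 - t^4/24 - t^6/720) 0 x H) as K.
  simpl in K. rewrite sinh_0 in K. enough (0 - 0 - 0^3/6 - 0^5/120 - 0^7/5040 <= sinh x - x - x^3/6 - x^5/120 - x^7/5040) by lra. apply K.
  - intros y _. unfold sinh, cosh. auto_derive; auto. fin.
  - intros y Hy. pose proof (cosh_ge6 y); lra.
Qed.

Lemma sin_le x : 0 <= x -> sin x <= x.
Proof. intros [H|H]. left; apply sin_lt_x; auto. subst; rewrite sin_0; lra. Qed.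

Lemma cos_ge2 x : 0 <= x -> 1 - x^2/2 <= cos x.
Proof. intros H.
  pose proof (incr_le (fun t => cos t - 1 + t^2/2) (fun t => t - sin t) 0 x H) as K.
  simpl in K. rewrite cos_0 in K. enough (1 - 1 + 0^2/2 <= cos x - 1 + x^2/2) by lra. apply K.
  - intros y _. auto_derive; auto. fin.
  - intros y Hy. pose proof (sin_le y); lra.
Qed.

Lemma shs3 x : 0 <= x -> x^3/3 <= sinh x - sin x.
Proof. intros H.
  assert (A: forall y, 0 <= y -> 2 * y <= sinh y + sin y).
  { intros y Hy.
    pose proof (incr_le (fun t => sinh t + sin t - 2 * t) (fun t => cosh t + cos t - 2) 0 y Hy) as K.
    simpl in K. rewrite sinh_0, sin_0 in K. enough (0 + 0 - 2 * 0 <= sinh y + sin y - 2 * y) by lra. apply K.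
    - intros z _. unfold sinh, cosh. auto_derive; auto. fin.
    - intros z Hz. pose proof (cosh_ge2 z); pose proof (cos_ge2 z); lra. }
  assert (A2: forall y, 0 <= y -> y^2 <= cosh y - cos y).
  { intros y Hy.
    pose proof (incr_le (fun t => cosh t - cos t - t^2) (fun t => sinh t + sin t - 2 * t) 0 y Hy) as K.
    simpl in K. rewrite cosh_0, cos_0 in K. enough (1 - 1 - 0^2 <= cosh y - cos y - y^2) by lra. apply K.
    - intros z _. unfold sinh, cosh. auto_derive; auto. fin.
    - intros z Hz. pose proof (A z); lra. }
  pose proof (incr_le (fun t => sinh t - sin t - t^3/3) (fun t => cosh t - cos t - t^2) 0 x H) as K.
  simpl in K. rewrite sinh_0, sin_0 in K. enough (0 - 0 - 0^3/3 <= sinh x - sin x - x^3/3) by lra. apply K.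
  - intros z _. unfold sinh, cosh. auto_derive; auto. fin.
  - intros z Hz. pose proof (A2 z); lra.
Qed.

Definition gg t := sinh t * cos t - cosh t * sin t.

Lemma PI_gt3 : 3 < PI.
Proof. pose proof PI2_3_2. lra. Qed.

Lemma gg_nonpos x : 0 <= x <= PI -> gg x <= 0.
Proof. intros [H1 H2].
  pose proof (incr_le (fun t => - gg t) (fun t => 2 * sinh t * sin t) 0 x H1) as K.
  unfold gg in *. rewrite sinh_0, sin_0 in K.
  enough (- (0 * cos 0 - cosh 0 * 0) <= - (sinh x * cos x - cosh x * sin x)) by lra. apply K.
  - intros y _. unfold sinh, cosh. auto_derive; auto. fin.
  - intros y Hy. pose proof (sinh_nonneg y (proj1 Hy)). pose proof (sin_ge_0 y (proj1 Hy) ltac:(lra)). nra.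
Qed.

Lemma Cc_le1 x : 0 <= x <= PI -> cosh x * cos x <= 1.
Proof. intros [H1 H2].
  pose proof (incr_le (fun t => 1 - cosh t * cos t) (fun t => - gg t) 0 x H1) as K.
  simpl in K. rewrite cosh_0, cos_0 in K.
  enough (1 - 1 * 1 <= 1 - cosh x * cos x) by lra. apply K.
  - intros y _. unfold gg, sinh, cosh. auto_derive; auto. fin.
  - intros y Hy. pose proof (gg_nonpos y ltac:(lra)). lra.
Qed.

Lemma Ss_le x : 0 <= x <= PI -> sinh x * sin x <= x ^ 2.
Proof. intros [H1 H2].
  assert (A : forall y, 0 <= y <= x -> 0 <= 2 * y - (cosh y * sin y + sinh y * cos y)).
  { intros y [Hy1 Hy2].
    pose proof (incr_le (fun t => 2 * t - (cosh t * sin t + sinh t * cos t)) (fun t => 2 - 2 * cosh t * cos t) 0 y Hy1) as K.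
    simpl in K. rewrite sinh_0, sin_0 in K.
    enough (2 * 0 - (cosh 0 * 0 + 0 * cos 0) <= 2 * y - (cosh y * sin y + sinh y * cos y)) by lra. apply K.
    - intros z _. unfold sinh, cosh. auto_derive; auto. fin.
    - intros z Hz. pose proof (Cc_le1 z ltac:(lra)). lra. }
  pose proof (incr_le (fun t => t^2 - sinh t * sin t) (fun t => 2 * t - (cosh t * sin t + sinh t * cos t)) 0 x H1) as K.
  simpl in K. rewrite sinh_0, sin_0 in K.
  enough (0 * (0 * 1) - 0 * 0 <= x^2 - sinh x * sin x) by lra. apply K.
  - intros z _. unfold sinh, cosh. auto_derive; auto. fin.
  - intros z Hz. apply A. lra.
Qed.

Lemma Cc_ge x : 0 <= x <= PI -> 1 - x^4/6 <= cosh x * cos x.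
Proof. intros [H1 H2].
  assert (A : forall y, 0 <= y <= x -> 0 <= gg y + 2 * y^3/3).
  { intros y [Hy1 Hy2].
    pose proof (incr_le (fun t => gg t + 2 * t^3/3) (fun t => 2 * t^2 - 2 * sinh t * sin t) 0 y Hy1) as K.
    unfold gg in *. rewrite sinh_0, sin_0 in K.
    enough (0 * cos 0 - cosh 0 * 0 + 2 * 0^3/3 <= sinh y * cos y - cosh y * sin y + 2 * y^3/3) by lra. apply K.
    - intros z _. unfold sinh, cosh. auto_derive; auto. fin.
    - intros z Hz. pose proof (Ss_le z ltac:(lra)). lra. }
  pose proof (incr_le (fun t => cosh t * cos t - 1 + t^4/6) (fun t => gg t + 2 * t^3/3) 0 x H1) as K.
  simpl in K. rewrite cosh_0, cos_0 in K.
  enough (1 * 1 - 1 + 0^4/6 <= cosh x * cos x - 1 + x^4/6) by lra. apply K.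
  - intros z _. unfold gg, sinh, cosh. auto_derive; auto. fin.
  - intros z Hz. apply A. lra.
Qed.

Definition BB t := sinh t ^ 4 + sin t ^ 4 - 4 * sinh t ^ 2 * sin t ^ 2
  + sinh t * cosh t * sin t * cos t * (sinh t ^ 2 + sin t ^ 2).

Lemma BB_small t : 0 < t <= 37/20 -> 0 < BB t.
Proof. intros [H1 H2].
  pose proof PI_gt3 as HPI.
  assert (Hs : 0 < sin t) by (apply sin_gt_0; lra).
  assert (HS : 0 < sinh t) by (apply sinh_pos; lra).
  pose proof (shs3 t ltac:(lra)) as Hd.
  pose proof (Ss_le t ltac:(lra)) as HX.
  pose proof (Cc_ge t ltac:(lra)) as HK.
  set (S := sinh t) in *. set (s := sin t) in *.
  set (K := cosh t * cos t) in *.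
  assert (E : BB t = (S - s)^2 * (S^2 + s^2 + (2 + K) * (S * s)) - 2 * (1 - K) * (S * s)^2).
  { unfold BB, K, S, s. field. }
  rewrite E.
  set (X := S * s) in *. set (d := S - s) in *.
  assert (HX0 : 0 < X) by (unfold X; nra).
  assert (Hsq : S^2 + s^2 >= 2 * X) by (unfold X; pose proof (pow2_ge_0 (S - s)); nra).
  assert (t4 : t^4 <= 1172/100).
  { assert (t^2 <= 37/20 * 37/20) by nra. nra. }
  assert (Hd0 : 0 < t^3/3) by (assert (0 < t^3) by (apply pow_lt; lra); lra).
  assert (Hd2 : (t^3/3)^2 <= d^2) by (apply pow_incr; lra).
  assert (H4K : 5 - t^4/6 <= 4 + K) by lra.
  assert (Hpos : 0 <= 5 - t^4/6) by lra.
  assert (L1 : (t^3/3)^2 * (5 - t^4/6) <= d^2 * (4 + K)).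
  { apply Rmult_le_compat; try lra. apply pow2_ge_0. }
  assert (L2 : (1 - K) * X <= t^4/6 * t^2).
  { assert ((1 - K) * X <= t^4/6 * X) by nra.
    assert (t^4/6 * X <= t^4/6 * t^2). { apply Rmult_le_compat_l; try lra. assert (0 <= t^4) by (apply pow_le; lra). lra. }
    lra. }
  assert (L3 : 0 < (t^3/3)^2 * (5 - t^4/6) - 2 * (t^4/6 * t^2)).
  { replace ((t^3/3)^2 * (5 - t^4/6) - 2 * (t^4/6 * t^2)) with (t^6 / 9 * (2 - t^4/6)) by field.
    assert (0 < t^6) by (apply pow_lt; lra). apply Rmult_lt_0_compat; lra. }
  assert (L4 : 0 < d^2 * (4 + K) - 2 * (1 - K) * X) by lra.
  assert (L5 : d^2 * (S^2 + s^2 + (2 + K) * X) >= d^2 * ((4 + K) * X)).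
  { apply Rmult_ge_compat_l. apply Rle_ge, pow2_ge_0. lra. }
  assert (0 < X * (d^2 * (4 + K) - 2 * (1 - K) * X)) by (apply Rmult_lt_0_compat; lra).
  nra.
Qed.

Lemma sinh_185 : 306/100 <= sinh (37/20).
Proof. pose proof (sinh_ge7 (37/20) ltac:(lra)). lra. Qed.

Lemma BB_big t : 37/20 <= t -> 0 < BB t.
Proof. intros H.
  assert (HS : 306/100 <= sinh t).
  { destruct H as [H|H]. pose proof (sinh_lt _ _ H). pose proof sinh_185. lra. rewrite <- H. apply sinh_185. }
  pose proof (ch2 t) as HC. pose proof (sc2 t) as Hc.
  pose proof (cosh_ge1 t) as HC1.
  unfold BB. set (S := sinh t) in *. set (C := cosh t) in *. set (s := sin t) in *. set (c := cos t) in *.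
  assert (Hsc : 2 * Rabs (s * c) <= 1).
  { pose proof (pow2_ge_0 (s - c)). pose proof (pow2_ge_0 (s + c)). destruct (Rle_dec 0 (s*c)). rewrite Rabs_right by lra. nra. rewrite Rabs_left by lra. nra. }
  assert (HCle : C <= S + / (2 * S)).
  { assert (0 < S) by lra. apply Rsqr_incr_0_var. unfold Rsqr.
    replace ((S + / (2 * S)) * (S + / (2 * S))) with (S^2 + 1 + / (4 * S^2)) by (field; lra).
    assert (0 < / (4 * S^2)) by (apply Rinv_0_lt_compat; nra). nra.
    assert (0 < / (2 * S)) by (apply Rinv_0_lt_compat; nra). lra. }
  set (D := S^2 + s^2).
  assert (HD : S^2 <= D) by (unfold D; nra).
  assert (HSC : S * C <= S^2 + 1/2).
  { assert (S * C <= S * (S + / (2 * S))) by (apply Rmult_le_compat_l; lra).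
    replace (S * (S + / (2 * S))) with (S^2 + 1/2) in H0 by (field; lra). lra. }
  assert (HT : - ((S^2 + 1/2) / 2 * D) <= S * C * s * c * D).
  { assert (0 <= D) by nra.
    assert (Rabs (s * c) * (S * C) <= 1/2 * (S^2 + 1/2)).
    { apply Rmult_le_compat; try lra. apply Rabs_pos. assert (0 < S) by lra. nra. }
    assert (- (Rabs (s*c)) <= s * c) by (pose proof (Rabs_maj2 (s*c)); lra).
    assert (0 <= S * C) by nra.
    assert (- (Rabs (s*c) * (S*C)) <= s * c * (S * C)) by nra.
    replace (S * C * s * c * D) with ((s * c * (S * C)) * D) by field.
    assert (- ((S^2 + 1/2)/2) <= s * c * (S * C)) by lra.
    nra. }
  assert (Hs2 : s^2 <= 1) by nra.
  assert (HS2 : 9 <= S^2) by nra.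
  assert (HS3 : 93636/10000 <= S^2) by (assert ((306/100) * (306/100) <= S * S) by (apply Rmult_le_compat; lra); replace (S^2) with (S*S) by ring; lra).
  replace (S^4 + s^4 - 4 * S^2 * s^2) with (D^2 - 6 * S^2 * s^2) by (unfold D; ring).
  assert (0 < D^2 - 6 * S^2 * s^2 - (S^2 + 1/2)/2 * D).
  { unfold D. set (q := s^2) in *. set (p := S^2) in *.
    assert (0 <= q) by (unfold q; nra).
    replace ((p + q)^2 - 6 * p * q - (p + 1/2)/2 * (p + q)) with
      (p^2/2 - p/4 - q * (9/2 * p + 1/4) + q^2) by (unfold q, p; field).
    assert (Hp : 93636/10000 <= p) by lra.
    assert (Hq1 : q <= 1) by lra.
    assert (0 <= (1 - q) * (9/2 * p + 1/4 - 1 - q)) by (apply Rmult_le_pos; lra).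
    assert (p^2/2 - p/4 - (9/2*p + 1/4) + 1 > 0) by nra.
    nra. }
  lra.
Qed.

Lemma BB_pos t : 0 < t -> 0 < BB t.
Proof. intros H. destruct (Rle_dec t (37/20)). apply BB_small; lra. apply BB_big; lra. Qed.

Definition g1 t := -2 * sinh t * sin t.
Definition g2 t := -2 * (cosh t * sin t + sinh t * cos t).
Definition g3 t := -4 * cosh t * cos t.
Definition QQ t := gg t ^ 2 * g3 t - 3 * gg t * g1 t * g2 t + 2 * g1 t ^ 3.
Definition QQd t :=
  let S := sinh t in let C := cosh t in let s := sin t in let c := cos t in
  (16 * C^3 * s^3 + 8 * S * C^2 * s^2 * c - 8 * S^2 * C * s * c^2 - 24 * S^2 * C * s^3 - 16 * S^3 * c^3 - 24 * S^3 * s^2 * c).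

Lemma gg_deriv t : is_derive gg t (g1 t).
Proof. unfold gg, g1, sinh, cosh. auto_derive; auto. field. Qed.

Lemma QQ_deriv t : is_derive QQ t (QQd t).
Proof. unfold QQ, QQd, gg, g1, g2, g3, sinh, cosh. auto_derive; auto. field. Qed.

Lemma P_identity S C s c : C^2 = 1 + S^2 -> c^2 = 1 - s^2 ->
  let g := S * c - C * s in
  let g1 := -2 * S * s in let g2 := -2 * (C * s + S * c) in let g3 := -4 * C * c in
  let Q := g^2 * g3 - 3 * g * g1 * g2 + 2 * g1^3 in
  let Qd := (16 * C^3 * s^3 + 8 * S * C^2 * s^2 * c - 8 * S^2 * C * s * c^2 - 24 * S^2 * C * s^3 - 16 * S^3 * c^3 - 24 * S^3 * s^2 * c) in
  Qd * g - 3 * g1 * Q = -16 * (S^4 + s^4 - 4 * S^2 * s^2 + S * C * s * c * (S^2 + s^2)).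
Proof. intros HC Hc. simpl.
  assert (H : forall a b : R, a = b -> a - b = 0) by (intros; lra).
  apply H in HC. apply H in Hc.
  match goal with |- ?L = ?R =>
    assert (K : L - R = (- 16 * s^4 - 16 * C^2 * s^4 - 16 * S * C * s^3 * c + 64 * S^2 * s^2 * c^2 + 80 * S^2 * s^4) * (C^2 - (1 + S^2))
                     + (64 * S^2 * s^2 - 16 * S^3 * C * s * c - 16 * S^4 - 16 * S^4 * c^2 - 16 * S^4 * s^2) * (c^2 - (1 - s^2))) by ring end.
  rewrite HC, Hc in K. lra.
Qed.

Definition Lpp t := QQ t / gg t ^ 3.

Lemma Lpp_deriv t : gg t <> 0 -> is_derive Lpp t (-16 * BB t / gg t ^ 4).
Proof. intros Hg.
  assert (D := is_derive_div QQ (fun y => gg y ^ 3) t (QQd t) (INR 3 * g1 t * gg t ^ Init.Nat.pred 3)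
            (QQ_deriv t) (is_derive_pow gg 3 t (g1 t) (gg_deriv t)) (pow_nonzero _ _ Hg)).
  simpl in D.
  replace (-16 * BB t / gg t ^ 4) with ((QQd t * gg t - 3 * g1 t * QQ t) / gg t ^ 4).
  2: { f_equal. pose proof (P_identity (sinh t) (cosh t) (sin t) (cos t) (ch2 t) (sc2 t)) as Pid.
       simpl in Pid. unfold QQd, gg, g1, QQ, g2, g3, BB. exact Pid. }
  unfold Lpp.
  replace ((QQd t * gg t - 3 * g1 t * QQ t) / gg t ^ 4) with
    ((QQd t * gg t ^ 3 - QQ t * ((1 + 1 + 1) * g1 t * (gg t * (gg t * 1)))) / (gg t ^ 3) ^ 2).
  exact D. field. exact Hg.
Qed.

Definition EE t := t * (sinh t ^ 2 - sin t ^ 2) - sin t * sinh t * gg t.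
Definition EEd t :=
  let S := sinh t in let C := cosh t in let s := sin t in let c := cos t in
  (- s^2 + C^2 * s^2 + S^2 - S^2 * c^2 + 2 * S^2 * s^2 - 2 * t * s * c + 2 * t * S * C).

Lemma EE_deriv t : is_derive EE t (EEd t).
Proof. unfold EE, EEd, gg, sinh, cosh. auto_derive; auto. field. Qed.

Lemma I4_identity t S C s c : C^2 = 1 + S^2 -> c^2 = 1 - s^2 ->
  let g := S * c - C * s in
  let g1 := -2 * S * s in let g2 := -2 * (C * s + S * c) in let g3 := -4 * C * c in
  let Q := g^2 * g3 - 3 * g * g1 * g2 + 2 * g1^3 in
  let E := t * (S ^ 2 - s ^ 2) - s * S * g in
  let Ed := (- s^2 + C^2 * s^2 + S^2 - S^2 * c^2 + 2 * S^2 * s^2 - 2 * t * s * c + 2 * t * S * C) in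
  2 * g1 * E - g * Ed = t / 2 * Q.
Proof. intros HC Hc. simpl.
  assert (H : forall a b : R, a = b -> a - b = 0) by (intros; lra).
  apply H in HC. apply H in Hc.
  match goal with |- ?L = ?R =>
    assert (K : L - R = (C * s^3 - S * s^2 * c + 2 * t * C * s^2 * c + 2 * t * S * s - 4 * t * S * s * c^2 - 6 * t * S * s^3) * (C^2 - (1 + S^2))
                     + (- S^2 * C * s + S^3 * c - 2 * t * S * s + 2 * t * S^2 * C * c + 2 * t * S^3 * s) * (c^2 - (1 - s^2))) by field end.
  rewrite HC, Hc in K. lra.
Qed.

Definition MM t := gg t ^ 2 / EE t.

Lemma MM_deriv t : EE t <> 0 -> is_derive MM t (t * gg t * QQ t / (2 * EE t ^ 2)).
Proof. intros HE.
  assert (D := is_derive_div (fun y => gg y ^ 2) EE t (INR 2 * g1 t * gg t ^ Init.Nat.pred 2) (EEd t)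
            (is_derive_pow gg 2 t (g1 t) (gg_deriv t)) (EE_deriv t) HE).
  simpl in D.
  pose proof (I4_identity t (sinh t) (cosh t) (sin t) (cos t) (ch2 t) (sc2 t)) as Id.
  cbv zeta in Id.
  unfold MM.
  replace (t * gg t * QQ t / (2 * EE t ^ 2)) with
    (((1 + 1) * g1 t * (gg t * 1) * EE t - gg t ^ 2 * EEd t) / EE t ^ 2).
  exact D.
  assert (E2 : 2 * g1 t * EE t - gg t * EEd t = t / 2 * QQ t).
  { unfold QQ, g2, g3, g1, EE, EEd, gg. cbv zeta. exact Id. }
  replace (((1 + 1) * g1 t * (gg t * 1) * EE t - gg t ^ 2 * EEd t)) with (gg t * (2 * g1 t * EE t - gg t * EEd t)) by ring.
  rewrite E2. field. exact HE.
Qed.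

Lemma num_id s : mu_num s = 2 * gg (s / 2) ^ 2.
Proof.
  unfold mu_num, gg. replace s with (2 * (s / 2)) at 1 2 3 4 by field.
  rewrite (cosh_2 (s/2)), (sinh_2 (s/2)), (sin_2a (s/2)), (cos_2a (s/2)).
  set (t := s / 2). pose proof (ch2 t) as HC. pose proof (sc2 t) as Hc.
  set (S := sinh t) in *. set (C := cosh t) in *. set (x := sin t) in *. set (c := cos t) in *.
  assert (H : forall a b : R, a = b -> a - b = 0) by (intros; lra).
  apply H in HC. apply H in Hc.
  match goal with |- ?L = ?R =>
    assert (K : L - R = (1 - 2 * x^2) * (C^2 - (1 + S^2)) + (-1 - 2 * S^2) * (c^2 - (1 - x^2))) by ring end.
  rewrite HC, Hc in K. lra.
Qed.

Lemma den_id s : mu_den s = 2 * EE (s / 2).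
Proof.
  unfold mu_den, EE, gg.
  assert (H1 : sinh s = 2 * sinh (s/2) * cosh (s/2)) by (rewrite <- sinh_2; f_equal; field).
  assert (H2 : sin s = 2 * sin (s/2) * cos (s/2)) by (rewrite <- sin_2a; f_equal; field).
  rewrite H1, H2. field.
Qed.

Lemma den_pos s : 0 < s -> 0 < mu_den s.
Proof. intros H. unfold mu_den.
  pose proof (sinh_ge s ltac:(lra)). pose proof (sin_lt_x s H).
  pose proof (sinh_pos (s/2) ltac:(lra)).
  assert (0 <= sin (s/2) ^ 2 * (sinh s - s)) by (apply Rmult_le_pos; [apply pow2_ge_0 | lra]).
  assert (0 < sinh (s/2) ^ 2 * (s - sin s)) by (apply Rmult_lt_0_compat; [apply pow_lt; lra | lra]).
  lra.
Qed.

Lemma EE_pos t : 0 < t -> 0 < EE t.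
Proof. intros H. pose proof (den_pos (2 * t) ltac:(lra)). rewrite den_id in H0.
  replace (2 * t / 2) with t in H0 by field. lra. Qed.

Lemma mu_eq s : 0 < s -> mu s = MM (s / 2).
Proof. intros H. unfold mu. destruct (Rle_dec s 0); [lra|].
  rewrite num_id, den_id. unfold MM. pose proof (EE_pos (s/2) ltac:(lra)). field. lra. Qed.

Definition muD s := / 2 * (s / 2 * gg (s / 2) * QQ (s / 2) / (2 * EE (s / 2) ^ 2)).

Lemma mu_deriv s : 0 < s -> derivable_pt_lim mu s (muD s).
Proof. intros H. apply is_derive_Reals.
  apply is_derive_ext_loc with (f := fun y => MM (y / 2)).
  - exists (mkposreal (s/2) ltac:(lra)). intros y Hy. simpl in Hy.
    unfold ball in Hy; simpl in Hy; unfold AbsRing_ball, abs, minus, plus, opp in Hy; simpl in Hy.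
    symmetry. apply mu_eq. apply Rabs_def2 in Hy. lra.
  - assert (D1 : is_derive (fun y : R => y / 2) s (/ 2)).
    { auto_derive; auto. field. }
    pose proof (MM_deriv (s/2) (Rgt_not_eq _ _ (EE_pos (s/2) ltac:(lra)))) as D2.
    pose proof (is_derive_comp MM (fun y => y / 2) s _ _ D2 D1) as D3.
    unfold muD. exact D3.
Qed.

Lemma muD_sign s : 0 < s -> (0 < muD s <-> 0 < gg (s/2) * QQ (s/2)) /\ (muD s = 0 <-> gg (s/2) * QQ (s/2) = 0)
   /\ (muD s < 0 <-> gg (s/2) * QQ (s/2) < 0).
Proof. intros H. pose proof (EE_pos (s/2) ltac:(lra)) as HE.
  assert (E : muD s = (s / 8 / EE (s/2) ^ 2) * (gg (s/2) * QQ (s/2))).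
  { unfold muD. field. lra. }
  assert (Hk : 0 < s / 8 / EE (s/2) ^ 2).
  { apply Rdiv_lt_0_compat. lra. apply pow_lt; lra. }
  rewrite E. set (k := s / 8 / EE (s/2) ^ 2) in *. set (x := gg (s/2) * QQ (s/2)).
  split; [|split]; split; intros.
  - destruct (Rle_dec x 0); [|lra]. assert (k * x <= 0) by (apply Rmult_le_0_l; lra). lra.
  - apply Rmult_lt_0_compat; lra.
  - apply Rmult_integral in H0. destruct H0; lra.
  - rewrite H0; ring.
  - destruct (Rle_dec 0 x); [|lra]. assert (0 <= k * x) by (apply Rmult_le_pos; lra). lra.
  - assert (k * x < k * 0) by (apply Rmult_lt_compat_l; lra). lra.
Qed.

Lemma sin_shift k y : sin (y + INR k * PI) = (-1)^k * sin y.
Proof. induction k. simpl. rewrite Rmult_0_l, Rplus_0_r. ring.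
  rewrite S_INR. replace (y + (INR k + 1) * PI) with ((y + INR k * PI) + PI) by ring.
  rewrite neg_sin, IHk. simpl. ring. Qed.

Lemma cos_shift k y : cos (y + INR k * PI) = (-1)^k * cos y.
Proof. induction k. simpl. rewrite Rmult_0_l, Rplus_0_r. ring.
  rewrite S_INR. replace (y + (INR k + 1) * PI) with ((y + INR k * PI) + PI) by ring.
  rewrite neg_cos, IHk. simpl. ring. Qed.

Lemma e2 k : (-1)^k * (-1)^k = 1.
Proof. induction k; simpl. ring. replace (-1 * (-1) ^ k * (-1 * (-1) ^ k)) with ((-1)^k * (-1)^k) by ring. auto. Qed.

Lemma e_cases k : (-1)^k = 1 \/ (-1)^k = -1.
Proof. induction k; simpl. auto. destruct IHk as [H|H]; rewrite H; [right|left]; ring. Qed.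

Lemma sin_kPI k : sin (INR k * PI) = 0.
Proof. rewrite <- (Rplus_0_l (INR k * PI)), sin_shift, sin_0. ring. Qed.
Lemma cos_kPI k : cos (INR k * PI) = (-1)^k.
Proof. rewrite <- (Rplus_0_l (INR k * PI)), cos_shift, cos_0. ring. Qed.
Lemma sin_kPI2 k : sin (INR k * PI + PI/2) = (-1)^k.
Proof. rewrite Rplus_comm, sin_shift, sin_PI2. ring. Qed.
Lemma cos_kPI2 k : cos (INR k * PI + PI/2) = 0.
Proof. rewrite Rplus_comm, cos_shift, cos_PI2. ring. Qed.

Lemma sin_sign k y : INR k * PI < y < INR k * PI + PI -> 0 < (-1)^k * sin y.
Proof. intros H. replace y with ((y - INR k * PI) + INR k * PI) by ring.
  rewrite sin_shift. rewrite <- Rmult_assoc, e2, Rmult_1_l. apply sin_gt_0; lra. Qed.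

Lemma cont_of_deriv (f df : R -> R) : (forall x, is_derive f x (df x)) -> continuity f.
Proof. intros H x. apply derivable_continuous_pt. exists (df x). apply is_derive_Reals. auto. Qed.

Lemma gg_cont : continuity gg.
Proof. apply (cont_of_deriv gg g1). apply gg_deriv. Qed.

Lemma ggQQ_cont : continuity (fun x => gg x * QQ x).
Proof. apply (continuity_mult gg QQ). apply gg_cont. apply (cont_of_deriv QQ QQd). apply QQ_deriv. Qed.

Lemma gg_mono k u v : INR k * PI <= u -> u < v -> v <= INR k * PI + PI -> 0 < v ->
  (-1)^k * gg v < (-1)^k * gg u.
Proof. intros H1 H2 H3 H4.
  assert (K := incr_lt (fun y => - ((-1)^k * gg y)) (fun y => 2 * sinh y * ((-1)^k * sin y)) u v H2).
  simpl in K. enough (- ((-1)^k * gg u) < - ((-1)^k * gg v)) by lra. apply K.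
  - intros y _. apply (is_derive_ext (fun y => (- (-1)^k) * gg y)). { intros. rewrite <- Ropp_mult_distr_l. reflexivity. }
    replace (2 * sinh y * ((-1) ^ k * sin y)) with (- (-1)^k * g1 y) by (unfold g1; ring).
    apply is_derive_scal. apply gg_deriv.
  - intros y Hy. assert (0 < y).
    { destruct (Rle_dec 0 u). lra. assert (0 <= INR k * PI) by (apply Rmult_le_pos; [apply pos_INR | pose proof PI_RGT_0; lra]). lra. }
    pose proof (sinh_pos y H). pose proof (sin_sign k y ltac:(lra)). nra.
Qed.

Lemma PI_pos : 0 < PI.
Proof. apply PI_RGT_0. Qed.

Lemma kPI_nonneg k : 0 <= INR k * PI.
Proof. apply Rmult_le_pos. apply pos_INR. pose proof PI_pos; lra. Qed.

Lemma gg_kPI k : gg (INR k * PI) = sinh (INR k * PI) * (-1)^k.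
Proof. unfold gg. rewrite sin_kPI, cos_kPI. ring. Qed.

Lemma gg_kPI2 k : gg (INR k * PI + PI/2) = - cosh (INR k * PI + PI/2) * (-1)^k.
Proof. unfold gg. rewrite sin_kPI2, cos_kPI2. ring. Qed.

Definition zero_ex (k : nat) : {z | INR (S k) * PI <= z <= INR (S k) * PI + PI/2 /\ gg z = 0}.
Proof.
  set (a := INR (S k) * PI).
  assert (Ha : 0 < a). { unfold a. apply Rmult_lt_0_compat. apply lt_0_INR. lia. apply PI_pos. }
  destruct (IVT (fun y => - ((-1)^(S k) * gg y)) a (a + PI/2)) as [z [Hz1 Hz2]].
  - apply continuity_opp. apply continuity_scal. apply gg_cont.
  - pose proof PI_pos. lra.
  - unfold a. rewrite gg_kPI. pose proof (sinh_pos _ Ha). rewrite Rmult_comm, Rmult_assoc, e2.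
    fold a. lra.
  - unfold a. rewrite gg_kPI2. pose proof (cosh_ge1 (INR (S k) * PI + PI / 2)).
    replace (- ((-1) ^ S k * (- cosh (INR (S k) * PI + PI / 2) * (-1) ^ S k))) with
      (cosh (INR (S k) * PI + PI / 2) * ((-1) ^ S k * (-1)^ S k)) by ring. rewrite e2. lra.
  - exists z. split. exact Hz1. pose proof (e_cases (S k)) as [E|E]; rewrite E in Hz2; lra.
Defined.

Definition tk (k : nat) : R := match k with O => 0 | S j => proj1_sig (zero_ex j) end.

Lemma tk_zero k : gg (tk k) = 0.
Proof. destruct k. simpl. unfold gg. rewrite sinh_0, sin_0. ring.
  exact (proj2 (proj2_sig (zero_ex k))). Qed.

Lemma tk_bounds k : (0 < k)%nat -> INR k * PI < tk k < INR k * PI + PI/2.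
Proof. intros Hk. destruct k. lia.
  change (tk (S k)) with (proj1_sig (zero_ex k)).
  destruct (proj2_sig (zero_ex k)) as [[H1 H2] H3].
  set (z := proj1_sig (zero_ex k)) in *.
  assert (Ha : 0 < INR (S k) * PI). { apply Rmult_lt_0_compat. apply lt_0_INR. lia. apply PI_pos. }
  split.
  - destruct H1 as [H1|H1]; auto. exfalso. rewrite <- H1, gg_kPI in H3.
    pose proof (sinh_pos _ Ha). pose proof (e_cases (S k)) as [E|E]; rewrite E in H3; lra.
  - destruct H2 as [H2|H2]; auto. exfalso. rewrite H2, gg_kPI2 in H3.
    pose proof (cosh_ge1 (INR (S k) * PI + PI / 2)). pose proof (e_cases (S k)) as [E|E]; rewrite E in H3; lra.
Qed.

Lemma tk_0 : tk 0 = 0.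
Proof. reflexivity. Qed.

Lemma tk_lt_next k : tk k < INR k * PI + PI/2 /\ INR (S k) * PI < tk (S k).
Proof. split.
  - destruct k. simpl. pose proof PI_pos. lra. apply tk_bounds. lia.
  - apply tk_bounds. lia.
Qed.

Lemma tk_incr k : tk k < tk (S k).
Proof. destruct (tk_lt_next k). rewrite S_INR in H0. pose proof PI_pos. lra. Qed.

Lemma tk_strict i j : (i < j)%nat -> tk i < tk j.
Proof. induction 1. apply tk_incr. pose proof (tk_incr m). lra. Qed.

Lemma tk_nonneg k : 0 <= tk k.
Proof. destruct k. simpl; lra. pose proof (tk_strict 0 (S k) ltac:(lia)). change (tk 0) with 0 in H. lra. Qed.

Lemma floor_PI y : 0 <= y -> exists n : nat, INR n * PI <= y < INR n * PI + PI.
Proof. intros Hy.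
  destruct (INR_unbounded (y / PI)) as [N HN].
  assert (HN' : y < INR N * PI).
  { pose proof PI_pos. apply (Rmult_lt_compat_r PI) in HN; auto. unfold Rdiv in HN.
    rewrite Rmult_assoc, Rinv_l, Rmult_1_r in HN; lra. }
  clear HN. induction N.
  - simpl in HN'. lra.
  - destruct (Rle_dec (INR N * PI) y).
    + exists N. rewrite S_INR in HN'. lra.
    + apply IHN. lra.
Qed.

Lemma gg_zeros y : 0 <= y -> gg y = 0 -> exists k, y = tk k.
Proof. intros Hy Hg.
  destruct (Req_dec y 0) as [E|Hy0]. exists 0%nat. rewrite E; reflexivity.
  destruct (floor_PI y Hy) as [n [Hn1 Hn2]].
  destruct n.
  - exfalso. simpl in *. assert (0 < y) by lra.
    pose proof (gg_mono 0 0 y ltac:(simpl; lra) H ltac:(simpl; lra) H).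
    simpl in H0. unfold gg in H0 at 2. rewrite sinh_0, sin_0 in H0. lra.
  - exists (S n).
    pose proof (tk_bounds (S n) ltac:(lia)) as [B1 B2].
    assert (y > 0) by lra.
    destruct (Rtotal_order y (tk (S n))) as [L|[L|L]]; auto; exfalso.
    + pose proof (gg_mono (S n) y (tk (S n)) Hn1 L ltac:(pose proof PI_pos; lra) ltac:(lra)).
      rewrite Hg, tk_zero in H0. lra.
    + pose proof (gg_mono (S n) (tk (S n)) y ltac:(lra) L ltac:(lra) ltac:(lra)).
      rewrite Hg, tk_zero in H0. lra.
Qed.

Lemma gg_nz k y : tk k < y < tk (S k) -> gg y <> 0.
Proof. intros H E. destruct (gg_zeros y) as [j Hj]. pose proof (tk_nonneg k); lra. auto.
  subst y. destruct (Nat.lt_total j k) as [L|[L|L]].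
  - pose proof (tk_strict _ _ L). lra.
  - subst; lra.
  - destruct (Nat.eq_dec j (S k)). subst; lra.
    pose proof (tk_strict (S k) j ltac:(lia)). lra.
Qed.

Lemma pow4_pos x : x <> 0 -> 0 < x ^ 4.
Proof. intros H. assert (0 < x * x) by (apply Rsqr_pos_lt; auto).
  replace (x ^ 4) with ((x * x) * (x * x)) by ring. apply Rmult_lt_0_compat; auto. Qed.

Lemma Lpp_decr k u v : tk k < u -> u < v -> v < tk (S k) -> Lpp v < Lpp u.
Proof. intros H1 H2 H3.
  assert (K := incr_lt (fun y => - Lpp y) (fun y => 16 * BB y / gg y ^ 4) u v H2).
  enough (- Lpp u < - Lpp v) by lra. apply K.
  - intros y Hy. assert (Hg : gg y <> 0) by (apply (gg_nz k); lra).
    replace (16 * BB y / gg y ^ 4) with (- (-16 * BB y / gg y ^ 4)) by (field; auto).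
    apply (is_derive_opp Lpp). apply Lpp_deriv; auto.
  - intros y Hy. assert (Hg : gg y <> 0) by (apply (gg_nz k); lra).
    pose proof (tk_nonneg k). assert (0 < BB y) by (apply BB_pos; lra).
    assert (0 < gg y ^ 4) by (apply pow4_pos; auto).
    apply Rdiv_lt_0_compat; lra.
Qed.

Lemma F_at_a y e : cos y = 0 -> sin y = e -> e * e = 1 -> 3 < sinh y ^ 2 -> 0 < sinh y ->
  0 < gg y * QQ y.
Proof. intros Hc Hs He HS HS0. unfold QQ, g1, g2, g3, gg. rewrite Hc, Hs.
  pose proof (ch2 y) as HC. pose proof (cosh_ge1 y).
  set (S := sinh y) in *. set (C := cosh y) in *.
  replace ((S * 0 - C * e) * ((S * 0 - C * e) ^ 2 * (-4 * C * 0) -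
    3 * (S * 0 - C * e) * (-2 * S * e) * (-2 * (C * e + S * 0)) + 2 * (-2 * S * e) ^ 3))
    with (4 * C * S * (S^2 - 3) - 12 * C * S * (C^2 - (1 + S^2)) + (- C * S * (12 * C^2 - 16 * S^2)) * (e * e + 1) * (e * e - 1)) by ring.
  rewrite HC, He. replace (1 + S^2 - (1 + S^2)) with 0 by ring. replace (1 - 1) with 0 by ring.
  assert (0 < 4 * C * S * (S^2 - 3)).
  { apply Rmult_lt_0_compat. apply Rmult_lt_0_compat; lra. lra. }
  lra.
Qed.

Lemma F_at_b y e : sin y = 0 -> cos y = e -> e * e = 1 -> 0 < sinh y -> gg y * QQ y < 0.
Proof. intros Hs Hc He HS0. unfold QQ, g1, g2, g3, gg. rewrite Hc, Hs.
  pose proof (cosh_ge1 y).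
  set (S := sinh y) in *. set (C := cosh y) in *.
  replace ((S * e - C * 0) * ((S * e - C * 0) ^ 2 * (-4 * C * e) -
    3 * (S * e - C * 0) * (-2 * S * 0) * (-2 * (C * 0 + S * e)) + 2 * (-2 * S * 0) ^ 3))
    with (- 4 * C * S^3 * (e * e) * (e * e)) by ring.
  rewrite He. assert (0 < C * S^3) by (apply Rmult_lt_0_compat; [lra | apply pow_lt; lra]). lra.
Qed.

Lemma crit_ex k : exists m, tk k < m < tk (S k) /\ QQ m = 0.
Proof.
  set (a := INR k * PI + PI/2). set (b := INR (S k) * PI).
  pose proof PI_pos. pose proof (kPI_nonneg k). pose proof PI2_3_2.
  assert (Hab : a < b) by (unfold a, b; rewrite S_INR; lra).
  destruct (tk_lt_next k) as [Ha Hb]. fold a b in Ha, Hb.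
  assert (Fa : 0 < gg a * QQ a).
  { apply (F_at_a a ((-1)^k)). apply cos_kPI2. apply sin_kPI2. apply e2.
    - assert (sinh (3/2) < sinh a) by (apply sinh_lt; unfold a; lra).
      pose proof (sinh_ge3 (3/2) ltac:(lra)) as H4.
      assert (2 < sinh a) by (replace ((3/2)^3) with (27/8) in H4 by field; lra).
      assert (4 < sinh a * sinh a) by nra. replace (sinh a ^ 2) with (sinh a * sinh a) by ring. lra.
    - apply sinh_pos; unfold a; lra. }
  assert (Fb : gg b * QQ b < 0).
  { apply (F_at_b b ((-1)^(S k))). apply sin_kPI. apply cos_kPI. apply e2.
    apply sinh_pos. assert (0 < a) by (unfold a; lra). lra. }
  destruct (IVT (fun y => - (gg y * QQ y)) a b) as [m [Hm1 Hm2]].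
  - apply continuity_opp. apply ggQQ_cont.
  - exact Hab.
  - lra.
  - lra.
  - exists m. assert (Hm : a < m < b).
    { destruct Hm1 as [Hq1 Hq2]. split.
      destruct Hq1 as [Hq1|Hq1]; auto. subst. lra.
      destruct Hq2 as [Hq2|Hq2]; auto. subst. lra. }
    split. lra.
    assert (Hg : gg m <> 0) by (apply (gg_nz k); lra).
    assert (Hz : gg m * QQ m = 0) by lra.
    apply Rmult_integral in Hz. destruct Hz; [contradiction|auto].
Qed.

Lemma gQ_Lpp y : gg y <> 0 -> gg y * QQ y = Lpp y * gg y ^ 4.
Proof. intros H. unfold Lpp. field. auto. Qed.

Lemma mu_pos_on k x : 2 * tk k < x < 2 * tk (S k) -> 0 < mu x.
Proof. intros H. pose proof (tk_nonneg k).
  rewrite mu_eq by lra. unfold MM.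
  assert (gg (x/2) <> 0) by (apply (gg_nz k); lra).
  pose proof (EE_pos (x/2) ltac:(lra)).
  apply Rdiv_lt_0_compat; auto. replace (gg (x/2) ^ 2) with (gg (x/2) * gg (x/2)) by ring.
  apply Rsqr_pos_lt; auto.
Qed.

Lemma mu_zero_tk k : mu (2 * tk k) = 0.
Proof. destruct (Req_dec (tk k) 0) as [E|E].
  - rewrite E. unfold mu. destruct (Rle_dec (2 * 0) 0); auto. lra.
  - pose proof (tk_nonneg k). rewrite mu_eq by lra. unfold MM.
    replace (2 * tk k / 2) with (tk k) by field. rewrite tk_zero. field.
    pose proof (EE_pos (tk k) ltac:(lra)). lra.
Qed.

Theorem mainTheorem6 :
  (forall x, 0 < x -> mu_den x <> 0) /\
  (forall x, 0 <= x -> 0 <= mu x) /\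
  exists s : nat -> R,
    s 0%nat = 0 /\
    (forall k, s k < s (S k)) /\
    (forall x, 0 <= x -> (mu x = 0 <-> exists k, x = s k)) /\
    forall k, exists m : R,
      s k < m < s (S k) /\
      derivable_pt_lim mu m 0 /\
      (forall x, s k < x < s (S k) -> derivable_pt_lim mu x 0 -> x = m) /\
      (forall x, s k < x < s (S k) -> exists l, derivable_pt_lim mu x l) /\
      (forall x y, s k <= x -> x < y -> y <= m -> mu x < mu y) /\
      (forall x y, m <= x -> x < y -> y <= s (S k) -> mu y < mu x).
Proof.
  split. { intros x Hx. pose proof (den_pos x Hx). lra. }
  split.
  { intros x [Hx|Hx].
    - rewrite mu_eq by lra. unfold MM. pose proof (EE_pos (x/2) ltac:(lra)).
      apply Rle_mult_inv_pos; auto. apply pow2_ge_0.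
    - subst. unfold mu. destruct (Rle_dec 0 0); lra. }
  exists (fun k => 2 * tk k).
  split. { simpl. ring. }
  split. { intros k. pose proof (tk_incr k). lra. }
  split.
  { intros x Hx. split.
    - intros Hm. destruct Hx as [Hx|Hx].
      + rewrite mu_eq in Hm by lra. unfold MM in Hm.
        pose proof (EE_pos (x/2) ltac:(lra)).
        assert (Hg : gg (x/2) = 0).
        { assert (gg (x/2) ^ 2 = 0).
          { apply (Rmult_eq_reg_r (/ EE (x/2))). rewrite Rmult_0_l. exact Hm.
            apply Rinv_neq_0_compat. lra. }
          destruct (Req_dec (gg (x/2)) 0) as [Z|Z]; auto.
          exfalso. pose proof (pow_nonzero _ 2 Z). contradiction. }
        destruct (gg_zeros (x/2) ltac:(lra) Hg) as [k Hk]. exists k. lra.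
      + exists 0%nat. subst. simpl. ring.
    - intros [k Hk]. subst. apply mu_zero_tk. }
  intros k.
  destruct (crit_ex k) as [m [[Hm1 Hm2] HQ]].
  assert (HL : Lpp m = 0) by (unfold Lpp; rewrite HQ; field; apply (gg_nz k); lra).
  pose proof (tk_nonneg k) as Ht0.
  assert (Sgn : forall z, 2 * tk k < z < 2 * tk (S k) ->
     (z < 2 * m -> 0 < muD z) /\ (2 * m < z -> muD z < 0) /\ (muD z = 0 -> z = 2 * m)).
  { intros z Hz. assert (Hg : gg (z/2) <> 0) by (apply (gg_nz k); lra).
    pose proof (pow4_pos _ Hg) as H4.
    destruct (muD_sign z ltac:(lra)) as [A [B C]]. rewrite (gQ_Lpp _ Hg) in A, B, C.
    split; [|split].
    - intros Hzm. apply A. pose proof (Lpp_decr k (z/2) m ltac:(lra) ltac:(lra) ltac:(lra)).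
      apply Rmult_lt_0_compat; lra.
    - intros Hzm. apply C. pose proof (Lpp_decr k m (z/2) ltac:(lra) ltac:(lra) ltac:(lra)).
      assert (Lpp (z/2) * gg (z/2) ^ 4 < 0 * gg (z/2) ^ 4) by (apply Rmult_lt_compat_r; lra). lra.
    - intros H0. apply B in H0. apply Rmult_integral in H0. destruct H0 as [H0|H0]; [|lra].
      destruct (Rtotal_order (z/2) m) as [L|[L|L]].
      + pose proof (Lpp_decr k (z/2) m ltac:(lra) L ltac:(lra)). lra.
      + lra.
      + pose proof (Lpp_decr k m (z/2) ltac:(lra) L ltac:(lra)). lra. }
  exists (2 * m).
  split. lra.
  split.
  { pose proof (mu_deriv (2 * m) ltac:(lra)) as D.
    assert (muD (2 * m) = 0).
    { apply muD_sign. lra. replace (2 * m / 2) with m by field. rewrite HQ. ring. }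
    rewrite H in D. exact D. }
  split.
  { intros x Hx Hd. pose proof (mu_deriv x ltac:(lra)) as D.
    pose proof (uniqueness_limite _ _ _ _ D Hd). apply (Sgn x Hx). auto. }
  split.
  { intros x Hx. exists (muD x). apply mu_deriv. lra. }
  split.
  { intros x y Hx Hxy Hy. destruct Hx as [Hx|Hx].
    - apply (incr_lt mu muD x y Hxy).
      + intros z Hz. apply is_derive_Reals. apply mu_deriv. lra.
      + intros z Hz. apply (Sgn z). lra. lra.
    - rewrite <- Hx. rewrite mu_zero_tk. apply (mu_pos_on k). lra. }
  { intros x y Hx Hxy Hy. destruct Hy as [Hy|Hy].
    - enough (- mu x < - mu y) by lra.
      apply (incr_lt (fun z => - mu z) (fun z => - muD z) x y Hxy).
      + intros z Hz. apply (is_derive_opp mu). apply is_derive_Reals. apply mu_deriv. lra.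
      + intros z Hz. enough (muD z < 0) by lra. apply (Sgn z). lra. lra.
    - rewrite Hy. rewrite mu_zero_tk. apply (mu_pos_on k). lra. }
Qed.
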